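(* Let $\mathcal{X}$ be a subcategory of $\mathcal{C}$ closed under extensions and CoCones, and let $\mathcal{W}$ be an $\mathcal{X}$-injective cogenerator for $\mathcal{X}$. Then $\widehat{\mathcal{X}}$ is closed under direct summands: if $C_1\oplus C_2\in\widehat{\mathcal{X}}$ then $C_1,C_2\in\widehat{\mathcal{X}}$.
   Context: $\mathcal{C}=(\mathcal{C},\mathbb{E},\mathfrak{s})$ is an extriangulated category (in the sense of Nakaoka–Palu) with enough projectives and enough injectives; a conflation realizing $\delta\in\mathbb{E}(C,A)$ is written as an $\mathbb{E}$-triangle $A\to B\to C\dashrightarrow$. All subcategories (here, $\mathcal{X}$ and $\mathcal{W}$) are full, additive, closed under isomorphisms and direct summands. Higher extensions: $\mathbb{E}^1=\mathbb{E}$, $\mathbb{E}^{i+1}(X,Y)=\mathbb{E}(X,\Sigma^iY)\cong\mathbb{E}(\Omega^iX,Y)$. $\mathcal{X}$ is extension-closed if for every $\mathbb{E}$-triangle $A\to B\to C\dashrightarrow$ with $A,C\in\mathcal{X}$ one has $B\in\mathcal{X}$; closed under CoCones if for every such $\mathbb{E}$-triangle with $B,C\in\mathcal{X}$ one has $A\in\mathcal{X}$. $\mathcal{W}$ is an $\mathcal{X}$-injective cogenerator for $\mathcal{X}$ if $\mathcal{W}\subseteq\mathcal{X}$, for each $X\in\mathcal{X}$ there is an $\mathbb{E}$-triangle $X\to W\to X'\dashrightarrow$ with $W\in\mathcal{W}$, $X'\in\mathcal{X}$, and $\mathbb{E}^i(X,W)=0$ for all $X\in\mathcal{X}$, $W\in\mathcal{W}$,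 $i\ge1$. For $n\ge0$, $\widehat{\mathcal{X}}_n$ is the class of objects $C$ for which there exist $\mathbb{E}$-triangles $K_{i+1}\to X_i\to K_i\dashrightarrow$ ($0\le i\le n-1$) with $K_0=C$, all $X_i\in\mathcal{X}$ and $K_n\in\mathcal{X}$; $\widehat{\mathcal{X}}=\bigcup_n\widehat{\mathcal{X}}_n$. *)

(* Defs.v *)
From HB Require Import structures.
From mathcomp Require Import all_boot all_algebra.
Set Implicit Arguments. Unset Strict Implicit. Unset Printing Implicit Defensive.
Import GRing.Theory.
Local Open Scope ring_scope.

(*   realizes d x y  <->  [A -x-> B -y-> C] belongs to the class s(d). *)
Record ExtriData := {
  Obj : Type;
  Hom : Obj -> Obj -> zmodType;
  comp : forall A B C : Obj, Hom B C -> Hom A B -> Hom A C;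
  idm : forall A : Obj, Hom A A;
  Ext : Obj -> Obj -> zmodType;                 (* Ext C A = E(C,A) *)
  push : forall (C A A' : Obj), Hom A A' -> Ext C A -> Ext C A';
  pull : forall (C' C A : Obj), Hom C' C -> Ext C A -> Ext C' A;
  realizes : forall (A B C : Obj), Ext C A -> Hom A B -> Hom B C -> Prop
}.

Arguments comp {D A B C} : rename.
Arguments idm {D} A : rename.
Arguments push {D C A A'} : rename.
Arguments pull {D C' C A} : rename.
Arguments realizes {D A B C} : rename.

Section ExtriDefs.
Variable D : ExtriData.
Local Notation Obj := (@Obj D).
Local Notation Hom := (@Hom D).
Local Notation Ext := (@Ext D).
Local Notation "f \oo g" := (comp f g) (at level 40, left associativity).

Definition is_iso (A B : Obj) (f : Hom A B) : Prop :=
  exists g : Hom B A, g \oo f = idm A /\ f \oo g = idm B.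

Definition isomorphic (A B : Obj) : Prop := exists f : Hom A B, is_iso f.

Definition is_biprod (A B S : Obj) (iA : Hom A S) (iB : Hom B S)
    (pA : Hom S A) (pB : Hom S B) : Prop :=
  [/\ pA \oo iA = idm A, pB \oo iB = idm B, pA \oo iB = 0, pB \oo iA = 0
    & iA \oo pA + iB \oo pB = idm S].

Definition is_zero_obj (Z : Obj) : Prop := idm Z = 0.

Definition seq_equiv (A B B' C : Obj) (x : Hom A B) (y : Hom B C)
    (x' : Hom A B') (y' : Hom B' C) : Prop :=
  exists b : Hom B B', [/\ is_iso b, b \oo x = x' & y' \oo b = y].

Definition conflation (A B C : Obj) (x : Hom A B) (y : Hom B C) : Prop :=
  exists d : Ext C A, realizes d x y.

Definition conf_obj (A B C : Obj) : Prop :=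
  exists (x : Hom A B) (y : Hom B C), conflation x y.

Definition ext_dsum (A A' AA C C' CC : Obj)
    (iA : Hom A AA) (iA' : Hom A' AA) (pC : Hom CC C) (pC' : Hom CC C')
    (d : Ext C A) (d' : Ext C' A') : Ext CC AA :=
  push iA (pull pC d) + push iA' (pull pC' d').

Record ExtriAxioms : Prop := {
  comp_assoc : forall (A B C E : Obj) (f : Hom C E) (g : Hom B C) (h : Hom A B),
      f \oo (g \oo h) = (f \oo g) \oo h;
  comp_id_l : forall (A B : Obj) (f : Hom A B), idm B \oo f = f;
  comp_id_r : forall (A B : Obj) (f : Hom A B), f \oo idm A = f;
  comp_addl : forall (A B C : Obj) (f f' : Hom B C) (g : Hom A B),
      (f + f') \oo g = f \oo g + f' \oo g;
  comp_addr : forall (A B C : Obj) (f : Hom B C) (g g' : Hom A B),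
      f \oo (g + g') = f \oo g + f \oo g';
  has_zero_obj : exists Z : Obj, is_zero_obj Z;
  has_biprod : forall A B : Obj, exists (S : Obj) (iA : Hom A S) (iB : Hom B S)
      (pA : Hom S A) (pB : Hom S B), is_biprod iA iB pA pB;
  push_addE : forall (C A A' : Obj) (a : Hom A A') (d d' : Ext C A),
      push a (d + d') = push a d + push a d';
  push_addH : forall (C A A' : Obj) (a a' : Hom A A') (d : Ext C A),
      push (a + a') d = push a d + push a' d;
  push_id : forall (C A : Obj) (d : Ext C A), push (idm A) d = d;
  push_comp : forall (C A A' A'' : Obj) (a : Hom A A') (a' : Hom A' A'')
      (d : Ext C A), push (a' \oo a) d = push a' (push a d);
  pull_addE : forall (C' C A : Obj) (c : Hom C' C) (d d' : Ext C A),
      pull c (d + d') = pull c d + pull c d';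
  pull_addH : forall (C' C A : Obj) (c c' : Hom C' C) (d : Ext C A),
      pull (c + c') d = pull c d + pull c' d;
  pull_id : forall (C A : Obj) (d : Ext C A), pull (idm C) d = d;
  pull_comp : forall (C'' C' C A : Obj) (c : Hom C' C) (c' : Hom C'' C')
      (d : Ext C A), pull (c \oo c') d = pull c' (pull c d);
  push_pull : forall (C' C A A' : Obj) (a : Hom A A') (c : Hom C' C)
      (d : Ext C A), push a (pull c d) = pull c (push a d);
  (* s(d) is exactly one equivalence class of sequences *)
  real_exists : forall (A C : Obj) (d : Ext C A),
      exists (B : Obj) (x : Hom A B) (y : Hom B C), realizes d x y;
  real_class : forall (A B B' C : Obj) (d : Ext C A) (x : Hom A B) (y : Hom B C)
      (x' : Hom A B') (y' : Hom B' C),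
      realizes d x y -> (realizes d x' y' <-> seq_equiv x y x' y');
  real_morph : forall (A B C A' B' C' : Obj) (d : Ext C A) (d' : Ext C' A')
      (x : Hom A B) (y : Hom B C) (x' : Hom A' B') (y' : Hom B' C')
      (a : Hom A A') (c : Hom C C'),
      realizes d x y -> realizes d' x' y' -> push a d = pull c d' ->
      exists b : Hom B B', b \oo x = x' \oo a /\ y' \oo b = c \oo y;
  real_zero : forall (A C S : Obj) (iA : Hom A S) (iC : Hom C S)
      (pA : Hom S A) (pC : Hom S C),
      is_biprod iA iC pA pC -> realizes (0 : Ext C A) iA pC;
  real_dsum : forall (A B C A' B' C' AA BB CC : Obj)
      (d : Ext C A) (d' : Ext C' A')
      (x : Hom A B) (y : Hom B C) (x' : Hom A' B') (y' : Hom B' C')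
      (iA : Hom A AA) (iA' : Hom A' AA) (pA : Hom AA A) (pA' : Hom AA A')
      (iB : Hom B BB) (iB' : Hom B' BB) (pB : Hom BB B) (pB' : Hom BB B')
      (iC : Hom C CC) (iC' : Hom C' CC) (pC : Hom CC C) (pC' : Hom CC C'),
      realizes d x y -> realizes d' x' y' ->
      is_biprod iA iA' pA pA' -> is_biprod iB iB' pB pB' ->
      is_biprod iC iC' pC pC' ->
      realizes (ext_dsum iA iA' pC pC' d d')
        (iB \oo x \oo pA + iB' \oo x' \oo pA') (iC \oo y \oo pB + iC' \oo y' \oo pB');
  ET3 : forall (A B C A' B' C' : Obj) (d : Ext C A) (d' : Ext C' A')
      (x : Hom A B) (y : Hom B C) (x' : Hom A' B') (y' : Hom B' C')
      (a : Hom A A') (b : Hom B B'),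
      realizes d x y -> realizes d' x' y' -> b \oo x = x' \oo a ->
      exists c : Hom C C', c \oo y = y' \oo b /\ push a d = pull c d';
  ET3op : forall (A B C A' B' C' : Obj) (d : Ext C A) (d' : Ext C' A')
      (x : Hom A B) (y : Hom B C) (x' : Hom A' B') (y' : Hom B' C')
      (b : Hom B B') (c : Hom C C'),
      realizes d x y -> realizes d' x' y' -> y' \oo b = c \oo y ->
      exists a : Hom A A', b \oo x = x' \oo a /\ push a d = pull c d';
  ET4 : forall (A B C Dd F : Obj) (d : Ext Dd A) (d' : Ext F B)
      (f : Hom A B) (f' : Hom B Dd) (g : Hom B C) (g' : Hom C F),
      realizes d f f' -> realizes d' g g' ->
      exists (E : Obj) (dm : Hom Dd E) (e : Hom E F) (h' : Hom C E)
        (d'' : Ext E A),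
        [/\ realizes (push f' d') dm e,
            realizes d'' (g \oo f) h',
            h' \oo g = dm \oo f',
            e \oo h' = g'
          & (pull dm d'' = d /\ push f d'' = pull e d')];
  ET4op : forall (Dd A B F C : Obj) (d : Ext B Dd) (d' : Ext C F)
      (f' : Hom Dd A) (f : Hom A B) (g' : Hom F B) (g : Hom B C),
      realizes d f' f -> realizes d' g' g ->
      exists (E : Obj) (dm : Hom Dd E) (e : Hom E F) (h' : Hom E A)
        (d'' : Ext C E),
        [/\ realizes (pull g' d) dm e,
            realizes d'' h' (g \oo f),
            h' \oo dm = f',
            f \oo h' = g' \oo e
          & (d' = push e d'' /\ push dm d = pull g d'')]
}.

Definition projective (P : Obj) : Prop :=
  forall (A B C : Obj) (x : Hom A B) (y : Hom B C) (c : Hom P C),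
    conflation x y -> exists b : Hom P B, y \oo b = c.

Definition injective (I : Obj) : Prop :=
  forall (A B C : Obj) (x : Hom A B) (y : Hom B C) (a : Hom A I),
    conflation x y -> exists b : Hom B I, b \oo x = a.

Definition enough_projectives : Prop :=
  forall C : Obj, exists (A P : Obj), projective P /\ conf_obj A P C.

Definition enough_injectives : Prop :=
  forall A : Obj, exists (I C : Obj), injective I /\ conf_obj A I C.

(* n-th cosyzygies: cosyz n Y K iff K = Sigma^n Y for some choice of
   conflations  K_j -> I_j -> K_{j+1}  with I_j injective and K_0 = Y *)
Inductive cosyz : nat -> Obj -> Obj -> Prop :=
  | cosyz0 : forall Y, cosyz 0 Y Y
  | cosyzS : forall n Y K I K', cosyz n Y K -> injective I ->
      conf_obj K I K' -> cosyz n.+1 Y K'.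

(* E^{i+1}(X,Y) = E(X, Sigma^i Y) = 0 *)
Definition higher_ext_zero (i : nat) (X Y : Obj) : Prop :=
  forall K : Obj, cosyz i.-1 Y K -> forall e : Ext X K, e = 0.

Definition subcategory (P : Obj -> Prop) : Prop :=
  [/\
      (forall A B : Obj, isomorphic A B -> P A -> P B),
      (exists Z : Obj, is_zero_obj Z /\ P Z),
      (forall (A B S : Obj) (iA : Hom A S) (iB : Hom B S) (pA : Hom S A)
         (pB : Hom S B), is_biprod iA iB pA pB -> P A -> P B -> P S)
    &
      (forall (A B S : Obj) (iA : Hom A S) (iB : Hom B S) (pA : Hom S A)
         (pB : Hom S B), is_biprod iA iB pA pB -> P S -> P A /\ P B)].

Definition extension_closed (P : Obj -> Prop) : Prop :=
  forall A B C : Obj, conf_obj A B C -> P A -> P C -> P B.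

Definition closed_under_CoCones (P : Obj -> Prop) : Prop :=
  forall A B C : Obj, conf_obj A B C -> P B -> P C -> P A.

Definition injective_cogenerator (X W : Obj -> Prop) : Prop :=
  [/\ (forall A, W A -> X A),
      (forall A, X A -> exists Wo X' : Obj, [/\ W Wo, X X' & conf_obj A Wo X'])
    & (forall (i : nat) (A B : Obj), (1 <= i)%N -> X A -> W B ->
         higher_ext_zero i A B)].

Fixpoint Xhat_n (X : Obj -> Prop) (n : nat) (C : Obj) : Prop :=
  match n with
  | 0 => X C
  | n'.+1 => exists K X0 : Obj, [/\ X X0, Xhat_n X n' K & conf_obj K X0 C]
  end.

Definition Xhat (X : Obj -> Prop) (C : Obj) : Prop := exists n, Xhat_n X n C.

End ExtriDefs.

(* Main.v *)
Require Import Defs.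
From HB Require Import structures.
From mathcomp Require Import all_boot all_algebra.
Set Implicit Arguments. Unset Strict Implicit. Unset Printing Implicit Defensive.
Import GRing.Theory.
Local Open Scope ring_scope.

Lemma zeroI (V : zmodType) (x : V) : x = x + x -> x = 0.
Proof. move=> h. have: x - x = x + x - x by rewrite -h. by rewrite subrr addrK. Qed.

Section Basics.
Variable D : ExtriData.
Variable HD : ExtriAxioms D.
Local Notation Obj := (@Obj D).
Local Notation Hom := (@Defs.Hom D).
Local Notation Ext := (@Defs.Ext D).
Local Notation "f \oo g" := (Defs.comp f g) (at level 40, left associativity).

Lemma comp0l (A B C : Obj) (g : Hom A B) : (0 : Hom B C) \oo g = 0.
Proof. apply: zeroI; by rewrite -comp_addl // addr0. Qed.
Lemma comp0r (A B C : Obj) (f : Hom B C) : f \oo (0 : Hom A B) = 0.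
Proof. apply: zeroI; by rewrite -comp_addr // addr0. Qed.
Lemma compNl (A B C : Obj) (f : Hom B C) (g : Hom A B) : (- f) \oo g = - (f \oo g).
Proof. apply/eqP; rewrite -addr_eq0 addrC -comp_addl // addrN comp0l //. Qed.
Lemma compNr (A B C : Obj) (f : Hom B C) (g : Hom A B) : f \oo (- g) = - (f \oo g).
Proof. apply/eqP; rewrite -addr_eq0 addrC -comp_addr // addrN comp0r //. Qed.
Lemma compBl (A B C : Obj) (f f' : Hom B C) (g : Hom A B) : (f - f') \oo g = f \oo g - f' \oo g.
Proof. by rewrite comp_addl // compNl. Qed.
Lemma compBr (A B C : Obj) (f : Hom B C) (g g' : Hom A B) : f \oo (g - g') = f \oo g - f \oo g'.
Proof. by rewrite comp_addr // compNr. Qed.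

Lemma push0E (C A A' : Obj) (a : Hom A A') : push a (0 : Ext C A) = 0.
Proof. apply: zeroI; by rewrite -push_addE // addr0. Qed.
Lemma push0H (C A A' : Obj) (d : Ext C A) : push (0 : Hom A A') d = 0.
Proof. apply: zeroI; by rewrite -push_addH // addr0. Qed.
Lemma pull0E (C' C A : Obj) (c : Hom C' C) : pull c (0 : Ext C A) = 0.
Proof. apply: zeroI; by rewrite -pull_addE // addr0. Qed.
Lemma pull0H (C' C A : Obj) (d : Ext C A) : pull (0 : Hom C' C) d = 0.
Proof. apply: zeroI; by rewrite -pull_addH // addr0. Qed.
Lemma pullNH (C' C A : Obj) (c : Hom C' C) (d : Ext C A) : pull (- c) d = - pull c d.
Proof. apply/eqP; rewrite -addr_eq0 addrC -pull_addH // addrN pull0H //. Qed.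

Lemma zero_from (Z B : Obj) : is_zero_obj Z -> forall f : Hom Z B, f = 0.
Proof. move=> hZ f. by rewrite -(comp_id_r HD f) hZ comp0r. Qed.
Lemma zero_to (Z B : Obj) : is_zero_obj Z -> forall f : Hom B Z, f = 0.
Proof. move=> hZ f. by rewrite -(comp_id_l HD f) hZ comp0l. Qed.

Lemma bp_triv1 (Z U : Obj) : is_zero_obj Z ->
  is_biprod (idm U) (0 : Hom Z U) (idm U) (0 : Hom U Z).
Proof.
move=> hZ; split; rewrite ?comp_id_l ?comp0l ?comp0r ?comp_id_r //; last by rewrite addr0.
Qed.
Lemma bp_triv2 (Z U : Obj) : is_zero_obj Z ->
  is_biprod (0 : Hom Z U) (idm U) (0 : Hom U Z) (idm U).
Proof.
move=> hZ; split; rewrite ?comp_id_l ?comp0l ?comp0r ?comp_id_r //; last by rewrite add0r.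
Qed.
Lemma bp_swap (A B S : Obj) (iA : Hom A S) (iB : Hom B S) pA pB :
  is_biprod iA iB pA pB -> is_biprod iB iA pB pA.
Proof. by case=> h1 h2 h3 h4 h5; split=> //; rewrite addrC. Qed.


Local Notation cA := (comp_assoc HD).
Local Notation cil := (comp_id_l HD).
Local Notation cir := (comp_id_r HD).

Lemma iso_of_lr (A B : Obj) (c : Hom A B) (L R : Hom B A) :
  L \oo c = idm A -> c \oo R = idm B -> is_iso c.
Proof.
move=> hL hR; exists R; split=> //.
have -> : R = L by rewrite -(cil R) -hL -cA hR cir.
exact: hL.
Qed.

Lemma inv_of_nil (C : Obj) (phi : Hom C C) :
  (phi - idm C) \oo (phi - idm C) = 0 -> exists g, g \oo phi = idm C /\ phi \oo g = idm C.
Proof.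
set psi := phi - idm C => hp.
have phiE : phi = psi + idm C by rewrite /psi subrK.
exists (idm C - psi); rewrite phiE; split.
- rewrite comp_addr // !cir compBl cil hp subr0. by rewrite addrC subrK.
- rewrite comp_addl // !cil compBr cir hp subr0. by rewrite addrC subrK.
Qed.

Lemma push_infl (A B C : Obj) (d : Ext C A) (x : Hom A B) (y : Hom B C) :
  realizes d x y -> push x d = 0.
Proof.
move=> hd; have [S [iA [iC [pA [pC hb]]]]] := has_biprod HD B C.
have hz := real_zero HD hb.
have [c [_ ->]] := ET3 HD (a := x) (b := iA) hd hz erefl.
exact: pull0E.
Qed.

Lemma split0 (A B C : Obj) (x : Hom A B) (y : Hom B C) :
  realizes (0 : Ext C A) x y -> exists (iC : Hom C B) (pA : Hom B A), is_biprod x iC pA y.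
Proof.
move=> hd; have [S [iA [iC [pA [pC hb]]]]] := has_biprod HD A C.
have hz := real_zero HD hb.
have [b [[g [hgb hbg]] hx hy]] := (real_class HD x y hz).1 hd.
case: hb => h1 h2 h3 h4 h5.
exists (b \oo iC), (pA \oo g); split.
- by rewrite -hx cA -(cA pA g b) hgb cir h1.
- by rewrite cA hy h2.
- by rewrite cA -(cA pA g b) hgb cir h3.
- by rewrite -hx cA hy h4.
- have -> : y = pC \oo g by rewrite -hy -cA hbg cir.
  rewrite -hx !cA -(cA b iA pA) -(cA b iC pC) -comp_addl // -comp_addr // h5 cir //.
Qed.

Lemma inj_split (I P C : Obj) (d : Ext C I) (x : Hom I P) (y : Hom P C) :
  Defs.injective I -> realizes d x y -> d = 0.
Proof.
move=> hI hd; have [r hr] := hI _ _ _ x y (idm I) (ex_intro _ d hd).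
by rewrite -(push_id HD d) -hr push_comp // (push_infl hd) push0E.
Qed.

Lemma psi_pull (A B C C' : Obj) (d : Ext C A) (x : Hom A B) (y : Hom B C) (psi : Hom C' C) :
  realizes d x y -> pull psi d = 0 -> exists s : Hom C' B, psi = y \oo s.
Proof.
move=> hd hp; have [S [iA [iC [pA [pC hb]]]]] := has_biprod HD A C'.
have hz := real_zero HD hb.
have [b [_ hyb]] := real_morph HD (a := idm A) (c := psi) hz hd ltac:(by rewrite push0E hp).
exists (b \oo iC); case: hb => _ h2 _ _ _.
by rewrite cA hyb -cA h2 cir.
Qed.

Lemma cone_endo (A B C : Obj) (d : Ext C A) (x : Hom A B) (y : Hom B C) (phi : Hom C C) :
  realizes d x y -> phi \oo y = y -> pull phi d = d ->
  exists g, g \oo phi = idm C /\ phi \oo g = idm C.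
Proof.
move=> hd h1 h2; apply: inv_of_nil.
have hp : pull (phi - idm C) d = 0 by rewrite pull_addH // pullNH pull_id // h2 subrr.
have [s hs] := psi_pull hd hp.
by rewrite {2}hs cA compBl h1 cil subrr comp0l.
Qed.

Lemma cone_unique (A B C C' : Obj) (d : Ext C A) (d' : Ext C' A) (x : Hom A B)
  (y : Hom B C) (y' : Hom B C') :
  realizes d x y -> realizes d' x y' -> isomorphic C C'.
Proof.
move=> hd hd'.
have e1 : idm B \oo x = x \oo idm A by rewrite cil cir.
have [c [hc1 hc2]] := ET3 HD hd hd' e1.
have [c' [hc1' hc2']] := ET3 HD hd' hd e1.
rewrite push_id // in hc2; rewrite push_id // in hc2'.
rewrite cir in hc1; rewrite cir in hc1'.
have [L [hL _]] := cone_endo (phi := c' \oo c) hd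
  ltac:(by rewrite -cA hc1 hc1') ltac:(by rewrite pull_comp // -hc2' -hc2).
have [R [_ hR]] := cone_endo (phi := c \oo c') hd'
  ltac:(by rewrite -cA hc1' hc1) ltac:(by rewrite pull_comp // -hc2 -hc2').
exists c; apply: (iso_of_lr (L := L \oo c') (R := c' \oo R)).
- by rewrite -cA.
- by rewrite cA.
Qed.

Lemma mid_transport (A B B' C : Obj) : conf_obj A B C -> isomorphic B B' -> conf_obj A B' C.
Proof.
move=> [x [y [d hd]]] [b [g [hgb hbg]]].
exists (b \oo x), (y \oo g), d.
apply/(real_class HD _ _ hd); exists b; split=> //; first by exists g.
by rewrite -cA hgb cir.
Qed.


Lemma bpE (A B S : Obj) (iA : Hom A S) (iB : Hom B S) pA pB :
  is_biprod iA iB pA pB ->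
  [/\ (forall Z (h : Hom Z A), pA \oo (iA \oo h) = h),
      (forall Z (h : Hom Z B), pB \oo (iB \oo h) = h),
      (forall Z (h : Hom Z B), pA \oo (iB \oo h) = 0)
    & (forall Z (h : Hom Z A), pB \oo (iA \oo h) = 0)].
Proof.
case=> h1 h2 h3 h4 _; split=> Z h; by rewrite cA ?h1 ?h2 ?h3 ?h4 ?cil ?comp0l.
Qed.

Lemma zero_obj_ex : exists Z : Obj, is_zero_obj Z.
Proof. exact: has_zero_obj HD. Qed.

Lemma dsum_L (U A' B' C' T S : Obj) (k1 : Hom U T) (k2 : Hom A' T) r1 r2
  (j1 : Hom U S) (j2 : Hom B' S) q1 q2 (d : Ext C' A') (x : Hom A' B') (y : Hom B' C') :
  is_biprod k1 k2 r1 r2 -> is_biprod j1 j2 q1 q2 -> realizes d x y ->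
  exists d' : Ext C' T, realizes d' (j1 \oo r1 + j2 \oo x \oo r2) (y \oo q2).
Proof.
move=> hT hS hd; have [Z hZ] := zero_obj_ex.
have h0 := real_zero HD (bp_triv1 U hZ).
have := real_dsum HD h0 hd hT hS (bp_triv2 C' hZ).
rewrite cir !comp0l add0r cil => h; by eexists; exact: h.
Qed.

Lemma dsum_R (K X1 A B P BB : Obj) (d : Ext A K) (x : Hom K X1) (y : Hom X1 A)
  (iA : Hom A P) (iB : Hom B P) pA pB (jX : Hom X1 BB) (jB : Hom B BB) qX qB :
  realizes d x y -> is_biprod iA iB pA pB -> is_biprod jX jB qX qB -> conf_obj K BB P.
Proof.
move=> hd hP hBB; have [Z hZ] := zero_obj_ex.
have h0 := real_zero HD (bp_triv2 B hZ).
have := real_dsum HD hd h0 (bp_triv1 K hZ) hBB hP.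
move=> h; do 3 eexists; exact: h.
Qed.

Lemma fact_po (A B1 B2 C2 S : Obj) (d2 : Ext C2 A) (x2 : Hom A B2) (y2 : Hom B2 C2)
  (x1 : Hom A B1) (j1 : Hom B1 S) (j2 : Hom B2 S) q1 q2 :
  realizes d2 x2 y2 -> is_biprod j1 j2 q1 q2 ->
  exists (E : Obj) (y' : Hom S E) (d'' : Ext E A),
    realizes d'' (j1 \oo x1 + j2 \oo x2) y' /\ conf_obj B1 E C2.
Proof.
move=> hd hS; have [T [k1 [k2 [r1 [r2 hT]]]]] := has_biprod HD B1 A.
have [e11 e22 e12 e21] := bpE hT.
have hbf : is_biprod (k1 \oo x1 + k2) k1 r2 (r1 - x1 \oo r2).
  case: hT => h1 h2 h3 h4 h5; split.
  - by rewrite comp_addr // cA h4 comp0l add0r h2.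
  - by rewrite compBl h1 -cA h4 comp0r subr0.
  - exact: h4.
  - rewrite compBl !comp_addr // e11 h3 -!cA e21 h2 comp0r cir.
    by rewrite addr0 add0r subrr.
  - rewrite comp_addl // compBr -cA addrC addrA addrNK; exact: h5.
have hf := real_zero HD hbf.
have [D' hg] := dsum_L hT hS hd.
have [E [dm [e [h' [d'' [hE1 hE2 _ _ _]]]]]] := ET4 HD hf hg.
exists E, h', d''; split; last by do 3 eexists; exact: hE1.
move: hE2; congr (realizes _ _ _).
case: (hT) => h1 h2 h3 h4 h5.
rewrite comp_addr // !comp_addl // -!cA e11 e21 h3 h2.
by rewrite !comp0r !cir addr0 add0r.
Qed.

Lemma pushout (A B1 C1 B2 C2 : Obj) (d1 : Ext C1 A) (x1 : Hom A B1) (y1 : Hom B1 C1)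
  (d2 : Ext C2 A) (x2 : Hom A B2) (y2 : Hom B2 C2) :
  realizes d1 x1 y1 -> realizes d2 x2 y2 ->
  exists P, conf_obj B1 P C2 /\ conf_obj B2 P C1.
Proof.
move=> hd1 hd2; have [S [j1 [j2 [q1 [q2 hS]]]]] := has_biprod HD B1 B2.
have [E [y' [d'' [hE c1]]]] := fact_po x1 hd2 hS.
have [E' [y'' [d''' [hE' c2]]]] := fact_po x2 hd1 (bp_swap hS).
rewrite addrC in hE'.
exists E; split=> //; apply: mid_transport c2 _.
exact: cone_unique hE' hE.
Qed.

Lemma pushout_c (A B1 C1 B2 C2 : Obj) :
  conf_obj A B1 C1 -> conf_obj A B2 C2 ->
  exists P, conf_obj B1 P C2 /\ conf_obj B2 P C1.
Proof. move=> [x1 [y1 [d1 h1]]] [x2 [y2 [d2 h2]]]; exact: pushout h1 h2. Qed.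

Lemma mid_exact (B P C' X : Obj) (b : Ext C' B) (x : Hom B P) (y : Hom P C') (e : Ext X P) :
  realizes b x y -> push y e = 0 -> exists e', e = push x e'.
Proof.
move=> hb he; have [N [u [v hu]]] := real_exists HD e.
have [E [dm [e_ [h' [d'' [h1 _ _ _ [_ h6]]]]]]] := ET4 HD hb hu.
rewrite he in h1; have [iC [pA [_ h2 _ _ _]]] := split0 h1.
exists (pull iC d''); by rewrite push_pull // h6 -pull_comp // h2 pull_id.
Qed.

Lemma bp_inj (I1 I2 J : Obj) (k1 : Hom I1 J) (k2 : Hom I2 J) r1 r2 :
  is_biprod k1 k2 r1 r2 -> Defs.injective I1 -> Defs.injective I2 -> Defs.injective J.
Proof.
move=> [_ _ _ _ h5] hI1 hI2 A B C x y a hc.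
have [b1 hb1] := hI1 _ _ _ x y (r1 \oo a) hc.
have [b2 hb2] := hI2 _ _ _ x y (r2 \oo a) hc.
exists (k1 \oo b1 + k2 \oo b2).
by rewrite comp_addl // -!cA hb1 hb2 !cA -comp_addl // h5 cil.
Qed.

Lemma cosyz0_inv (Y K : Obj) : cosyz 0 Y K -> K = Y.
Proof. move=> h; inversion h; done. Qed.

Lemma cosyz_cons (j : nat) (C I C1 K : Obj) :
  Defs.injective I -> conf_obj C I C1 -> cosyz j C1 K -> cosyz j.+1 C K.
Proof.
move=> hI hc h; elim: h hc => [Y|n Y K0 I' K' _ IH hI' hc'] hc.
- exact: cosyzS (cosyz0 C) hI hc.
- exact: cosyzS (IH hc) hI' hc'.
Qed.

Lemma cosyz_dest_aux (m : nat) (C K : Obj) : cosyz m C K -> forall j, m = j.+1 ->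
  exists I C1, [/\ Defs.injective I, conf_obj C I C1 & cosyz j C1 K].
Proof.
elim=> [Y|n Y K0 I' K' h0 IH hI' hc'] j // [] ?; subst j.
case: n h0 IH => [|n] h0 IH.
- rewrite (cosyz0_inv h0) in hc'; exists I', K'; split=> //; exact: cosyz0.
- have [I1 [C1 [hi hc h]]] := IH n erefl.
  exists I1, C1; split=> //; exact: cosyzS h hI' hc'.
Qed.

Lemma cosyz_dest (j : nat) (C K : Obj) :
  cosyz j.+1 C K -> exists I C1, [/\ Defs.injective I, conf_obj C I C1 & cosyz j C1 K].
Proof. move=> h; exact: cosyz_dest_aux h j erefl. Qed.

End Basics.

Section Main.
Variable D : ExtriData.
Variable HD : ExtriAxioms D.
Local Notation Obj := (@Obj D).
Local Notation Hom := (@Defs.Hom D).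
Local Notation Ext := (@Defs.Ext D).
Local Notation "f \oo g" := (Defs.comp f g) (at level 40, left associativity).
Local Notation cA := (comp_assoc HD).
Local Notation cil := (comp_id_l HD).
Local Notation cir := (comp_id_r HD).

Variables (X W : Obj -> Prop).
Hypothesis Hinj : enough_injectives D.
Hypothesis HXsub : subcategory X.
Hypothesis HXext : extension_closed X.
Hypothesis HXcoc : closed_under_CoCones X.
Hypothesis HW : injective_cogenerator X W.

Definition Vz (Z : Obj) : Prop :=
  forall j K, cosyz j Z K -> forall Xo, X Xo -> forall e : Ext Xo K, e = 0.

Lemma TT (j : nat) : forall A B C : Obj, conf_obj A B C -> Vz A -> Vz B ->
  forall K, cosyz j C K -> forall Xo, X Xo -> forall e : Ext Xo K, e = 0.
Proof.
elim: j => [|j IH] A B C hc hA hB K hK Xo hXo e.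
all: have [IA [SA [hIA hcA]]] := Hinj A.
all: have [P [cBP cIP]] := pushout_c HD hc hcA.
all: have [x [y [d hd]]] := cIP.
all: have d0 := inj_split HD hIA hd; rewrite d0 in hd.
all: have [iC [pA hbP]] := split0 HD hd.
all: have hS : Vz SA by move=> j' K' hK'; apply: hA; exact: cosyz_cons hIA hcA hK'.
all: have [b [c [be hbe]]] := cBP.
- rewrite (cosyz0_inv hK) in e *.
  have e1 : push iC e = 0.
    have h0 : push c (push iC e) = 0 by apply: (hS 0%N); [exact: cosyz0|].
    have [e' ->] := mid_exact HD hbe h0.
    by rewrite (hB 0%N B (cosyz0 B) Xo hXo e') push0E.
  case: hbP => _ h2 _ _ _.
  by rewrite -(push_id HD e) -h2 push_comp // e1 push0E.
- have [I [C1 [hI [g [h [ga hga]]] hK1]]] := cosyz_dest hK.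
  have [J [k1 [k2 [r1 [r2 hJ]]]]] := has_biprod HD IA I.
  have hJi := bp_inj HD hJ hIA hI.
  have [d' hd'] := dsum_L HD hbP hJ hga.
  have [E [dm [e_ [h' [d'' [h1 h2 _ _ _]]]]]] := ET4 HD hbe hd'.
  apply: (IH SA E C1 _ hS _ K hK1 Xo hXo e).
  + by do 3 eexists; exact: h1.
  + move=> j' K' hK'; apply: hB; apply: cosyz_cons hJi _ hK'.
    by do 3 eexists; exact: h2.
Qed.

Lemma What_Vz (n : nat) : forall H, Xhat_n W n H -> Vz H.
Proof.
case: HW => _ _ hW3.
elim: n => [|n IH] H.
- move=> hH j K hK Xo hXo e; exact: (hW3 j.+1 Xo H isT hXo hH K hK e).
- move=> [K0 [W0 [hW0 hK0 hc]]].
  move=> j K hK Xo hXo e.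
  apply: (TT hc (IH _ hK0) _ hK hXo) => j' K' hK' Xo' hXo' e'.
  exact: (hW3 j'.+1 Xo' W0 isT hXo' hW0 K' hK' e').
Qed.

Lemma What_sub (n : nat) : forall H, Xhat_n W n H -> Xhat_n X n H.
Proof.
case: HW => hWX _ _.
elim: n => [|n IH] H /=; first exact: hWX.
move=> [K0 [W0 [hW0 hK0 hc]]]; exists K0, W0; split=> //; [exact: hWX | exact: IH].
Qed.

Lemma bp_closed (n : nat) : forall (A B P : Obj) (iA : Hom A P) (iB : Hom B P) pA pB,
  is_biprod iA iB pA pB -> Xhat_n X n A -> X B -> Xhat_n X n P.
Proof.
case: HXsub => _ _ hbp _.
case: n => [|n] A B P iA iB pA pB hP /=; first exact: hbp hP.
move=> [K [X1 [hX1 hK [x [y [d hd]]]]]] hB.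
have [BB [jX [jB [qX [qB hBB]]]]] := has_biprod HD X1 B.
exists K, BB; split=> //; [exact: hbp hBB hX1 hB | exact: (@dsum_R D HD K X1 A B P BB d x y iA iB pA pB jX jB qX qB hd hP hBB)].
Qed.

Lemma cocone_lem (n : nat) : forall M P X2 : Obj,
  conf_obj M P X2 -> Xhat_n X n P -> X X2 -> Xhat_n X n M.
Proof.
case: n => [|n] M P X2 hc /=; first exact: HXcoc hc.
move=> [K [X1 [hX1 hK [f' [f [d hd]]]]]] hX2.
have [g' [g [d' hd']]] := hc.
have [E [dm [e [h' [d'' [h1 h2 _ _ _]]]]]] := ET4op HD hd hd'.
exists K, E; split=> //.
- apply: HXcoc hX1 hX2; by do 3 eexists; exact: h2.
- by do 3 eexists; exact: h1.
Qed.

Lemma Bdual (n : nat) : forall K, Xhat_n X n K ->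
  exists H X2, [/\ Xhat_n W n H, X X2 & conf_obj K H X2].
Proof.
case: HW => _ hcog _.
elim: n => [|n IH] K /=; first exact: hcog.
move=> [K0 [X1 [hX1 hK0 hc]]].
have [H0 [X0 [hH0 hX0 hc0]]] := IH _ hK0.
have [P [cXP cHP]] := pushout_c HD hc hc0.
have hP : X P by exact: HXext cXP hX1 hX0.
have [WP [X' [hWP hX' cPW]]] := hcog _ hP.
have [f [f' [d hd]]] := cHP.
have [g [g' [d' hd']]] := cPW.
have [E [dm [e [h' [d'' [h1 h2 _ _ _]]]]]] := ET4 HD hd hd'.
exists E, X'; split=> //.
- exists H0, WP; split=> //; by do 3 eexists; exact: h2.
- by do 3 eexists; exact: h1.
Qed.

Lemma lemA (n : nat) (K M X0 : Obj) :
  conf_obj K M X0 -> Xhat_n X n K -> X X0 -> Xhat_n X n M.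
Proof.
move=> hc hK hX0.
have [H [X2 [hH hX2 hc']]] := Bdual hK.
have [P [cMP cHP]] := pushout_c HD hc hc'.
have [x [y [e he]]] := cHP.
rewrite (What_Vz hH (cosyz0 H) hX0 e) in he.
have [iC [pA hb]] := split0 HD he.
apply: cocone_lem cMP _ hX2.
exact: bp_closed hb (What_sub hH) hX0.
Qed.


Lemma main_n (n : nat) : forall (C1 C2 S : Obj) (i1 : Hom C1 S) (i2 : Hom C2 S) p1 p2,
  is_biprod i1 i2 p1 p2 -> Xhat_n X n S -> Xhat_n X n C1 /\ Xhat_n X n C2.
Proof.
case: HXsub => hiso _ _ hsum.
elim: n => [|m IH] C1 C2 S i1 i2 p1 p2 hb /=; first exact: hsum hb.
move=> [K [X0 [hX0 hK [f' [f [de hde]]]]]].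
have hb12 := real_zero HD (bp_swap hb).
have [E [dm [e [h' [d'' [h1 h2 _ _ _]]]]]] := ET4op HD hde hb12.
have hb21 := real_zero HD hb.
have [E' [dm' [e' [h'' [d''' [h1' h2' _ _ _]]]]]] := ET4op HD hde hb21.
have [KK [j1 [j2 [q1 [q2 hKK]]]]] := has_biprod HD K K.
have [M [m1 [m2 [n1 [n2 hM]]]]] := has_biprod HD E' E.
have hDs := real_dsum HD h1' h1 hKK hM hb.
have hbt : is_biprod (j1 - j2) j2 q1 (q1 + q2).
  case: (hKK) => k1 k2 k3 k4 k5; split.
  - by rewrite (compBr HD) k1 k3 subr0.
  - by rewrite comp_addl // k2 k3 add0r.
  - exact: k3.
  - by rewrite (compBr HD) !comp_addl // k1 k2 k3 k4 addr0 add0r subrr.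
  - by rewrite comp_addr // (compBl HD) addrA subrK.
have hz := real_zero HD hbt.
have [F [dF [eF [hF [dF' [g1 g2 _ _ _]]]]]] := ET4 HD hz hDs.
have hpush : push (q1 + q2) (ext_dsum j1 j2 p1 p2 (pull i1 de) (pull i2 de)) = de.
  case: (hKK) => k1 k2 k3 k4 k5; case: (hb) => b1 b2 b3 b4 b5.
  rewrite /ext_dsum push_addE // -!push_comp // !comp_addl // k1 k2 k3 k4.
  rewrite addr0 add0r !push_id // -!pull_comp // -pull_addH // b5 pull_id //.
rewrite hpush in g1.
have [b [hbi _ _]] := (real_class HD dF eF hde).1 g1.
have hXF : X F by apply: hiso hX0; exists b.
have hMm : Xhat_n X m M.
  apply: (lemA (K := K) (X0 := F)) => //; by do 3 eexists; exact: g2.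
have [hE' hE] := IH _ _ _ _ _ _ _ hM hMm.
split.
- exists E, X0; split=> //; by do 3 eexists; exact: h2.
- exists E', X0; split=> //; by do 3 eexists; exact: h2'.
Qed.

End Main.

Theorem proposition3p14 (D : ExtriData) (HD : ExtriAxioms D)
  (Hproj : enough_projectives D) (Hinj : enough_injectives D)
  (X W : Obj D -> Prop)
  (HXsub : subcategory X) (HWsub : subcategory W)
  (HXext : extension_closed X) (HXcoc : closed_under_CoCones X)
  (HW : injective_cogenerator X W)
  (C1 C2 S : Obj D) (i1 : @Defs.Hom D C1 S) (i2 : @Defs.Hom D C2 S) (p1 : @Defs.Hom D S C1)
  (p2 : @Defs.Hom D S C2) :
  is_biprod i1 i2 p1 p2 -> Xhat X S -> Xhat X C1 /\ Xhat X C2.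
Proof.
move=> hb [n hn].
have [h1 h2] := main_n HD Hinj HXsub HXext HXcoc HW hb hn.
by split; exists n.
Qed.
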